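(* Let $A$ be a locally compact group and let $I$ be a linear functional on $C_0(A)$ such that $I(f)\geq I(l_h(f))$ for every non-negative $f\in C_0(A)$ and every $h\in A$. Then $I$ is left invariant, i.e. $I(l_h(f))=I(f)$ for all $h\in A$. The analogous statement holds with $r_h$ in place of $l_h$ (giving right invariance).
   Context: $C_0(A)$ is the space of continuous functions on $A$ with compact support; $l_h(f)(a)=f(ha)$ and $r_h(f)(a)=f(ah)$. *)

(* Defs.v *)
From HB Require Import structures.
From mathcomp Require Import all_boot all_order all_algebra.
From mathcomp Require Import all_classical all_reals all_analysis.
Set Implicit Arguments. Unset Strict Implicit. Unset Printing Implicit Defensive.
Import Order.TTheory GRing.Theory Num.Theory.
Import numFieldNormedType.Exports.
Local Open Scope classical_set_scope.
Local Open Scope ring_scope.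

Definition group_axioms (A : Type) (mul : A -> A -> A) (inv : A -> A) (e : A) :=
  [/\ forall x y z, mul x (mul y z) = mul (mul x y) z,
      forall x, mul e x = x, forall x, mul x e = x,
      forall x, mul (inv x) x = e & forall x, mul x (inv x) = e].

Definition locally_compact_group (A : topologicalType)
  (mul : A -> A -> A) (inv : A -> A) (e : A) : Prop :=
  [/\ group_axioms mul inv e,
      continuous (fun p : A * A => mul p.1 p.2),
      continuous inv,
      hausdorff_space A &
      locally_compact [set: A]].

(* C_0(A): continuous real-valued functions with compact support. *)
Definition Cc (A : topologicalType) (R : realType) (f : A -> R) : Prop :=
  continuous f /\ compact (closure [set x | f x != 0]).

(* Linear functional on C_0(A) (given as a map on all functions; only its
   values on C_0(A) matter). *)
Definition linear_on_Cc (A : topologicalType) (R : realType)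
  (I : (A -> R) -> R) : Prop :=
  (forall f g, Cc f -> Cc g -> I (fun x => f x + g x) = I f + I g) /\
  (forall (c : R) f, Cc f -> I (fun x => c * f x) = c * I f).

Definition ltransl (A : Type) (R : Type) (mul : A -> A -> A) (h : A) (f : A -> R) :=
  fun a => f (mul h a).
Definition rtransl (A : Type) (R : Type) (mul : A -> A -> A) (h : A) (f : A -> R) :=
  fun a => f (mul a h).

(* Main.v *)
Require Import Defs.
From mathcomp Require Import all_boot all_order all_algebra.
From mathcomp Require Import all_classical all_reals all_analysis.
Import Order.TTheory GRing.Theory Num.Theory.
Import numFieldNormedType.Exports.
Local Open Scope classical_set_scope.
Local Open Scope ring_scope.
Set Implicit Arguments. Unset Strict Implicit.

Lemma Cc_sub (R : realType) (A : topologicalType) (f g : A -> R) :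
  Cc f -> continuous g -> (forall x, g x != 0 -> f x != 0) -> Cc g.
Proof.
move=> [fc fk] gc sub; split => //.
have H : closure [set x | g x != 0] `<=` closure [set x | f x != 0].
  by apply: closureS => x /= /sub.
exact: (subclosed_compact (@closed_closure _ _) fk H).
Qed.

Lemma Cc_comp (R : realType) (A : topologicalType) (f : A -> R) (phi psi : A -> A) :
  Cc f -> continuous phi -> continuous psi -> (forall x, psi (phi x) = x) ->
  Cc (fun x => f (phi x)).
Proof.
move=> [fc fk] phic psic K; split.
  by move=> x; apply: continuous_comp; [exact: phic | exact: fc].
have Kc : compact (psi @` closure [set x | f x != 0]).
  by apply: continuous_compact => //; exact: continuous_subspaceT.
suff H : closure [set x | f (phi x) != 0] `<=` psi @` closure [set x | f x != 0].
  exact: (subclosed_compact (@closed_closure _ _) Kc H).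
have : closure (phi @^-1` [set x | f x != 0]) `<=` phi @^-1` closure [set x | f x != 0].
  have cl : closed (phi @^-1` closure [set x | f x != 0]).
    by move: (@closed_closure _ [set x | f x != 0]); move/continuous_closedP: phic; apply.
  have E := (closure_id _).1 cl.
  rewrite [X in _ `<=` X]E.
  apply: closureS => x /= fx; exact: subset_closure.
move=> H x /H phx; exists (phi x) => //.
Qed.

Lemma cont_l (A : topologicalType) (mul : A -> A -> A) h :
  continuous (fun p : A * A => mul p.1 p.2) -> continuous (fun x => mul h x).
Proof.
move=> mc x; apply: (cvg_comp _ _ (cvg_pair (cvg_cst h) cvg_id) (mc (h, x))).
Qed.

Lemma cont_r (A : topologicalType) (mul : A -> A -> A) h :
  continuous (fun p : A * A => mul p.1 p.2) -> continuous (fun x => mul x h).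
Proof.
move=> mc x; apply: (cvg_comp _ _ (cvg_pair cvg_id (cvg_cst h)) (mc (x, h))).
Qed.

Lemma norm_cont (R : realType) (A : topologicalType) (f : A -> R) :
  continuous f -> continuous (fun x => `|f x|).
Proof. by move=> fc x; apply: continuous_comp; [exact: fc| exact: norm_continuous]. Qed.

Lemma scal_cont (R : realType) (A : topologicalType) (f : A -> R) (c : R) :
  continuous f -> continuous (fun x => c * f x).
Proof. by move=> fc x; apply: cvgM; [exact: cvg_cst | exact: fc]. Qed.

Lemma add_cont (R : realType) (A : topologicalType) (f g : A -> R) :
  continuous f -> continuous g -> continuous (fun x => f x + g x).
Proof. by move=> fc gc x; apply: cvgD; [exact: fc | exact: gc]. Qed.

Lemma gen_inv (R : realType) (A : topologicalType) (I : (A -> R) -> R) (phi psi : A -> A) :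
  linear_on_Cc I -> continuous phi -> continuous psi ->
  (forall x, psi (phi x) = x) -> (forall x, phi (psi x) = x) ->
  (forall f, Cc f -> (forall a, 0 <= f a) -> I (fun x => f (phi x)) <= I f) ->
  (forall f, Cc f -> (forall a, 0 <= f a) -> I (fun x => f (psi x)) <= I f) ->
  forall f, Cc f -> I (fun x => f (phi x)) = I f.
Proof.
move=> [Iadd Iscal] phic psic K1 K2 H1 H2.
have pos : forall f, Cc f -> (forall a, 0 <= f a) -> I (fun x => f (phi x)) = I f.
  move=> f fC f0; apply/le_anti; rewrite H1 //=.
  have -> : I f = I (fun x => (fun y => f (phi y)) (psi x)).
    by congr I; apply/funext => x /=; rewrite K2.
  by apply: H2 => //; exact: Cc_comp fC phic psic K1.
move=> f fC.
have fc := fC.1.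
have bC : Cc (fun x => `|f x|).
  apply: (Cc_sub fC); first exact: norm_cont.
  by move=> x; rewrite normr_eq0.
have aC : Cc (fun x => f x + `|f x|).
  apply: (Cc_sub fC).
    exact: add_cont fc (norm_cont fc).
  by move=> x; apply: contra => /eqP ->; rewrite normr0 addr0.
have b0 : forall a, 0 <= `|f a| by move=> a.
have a0 : forall a, 0 <= f a + `|f a|.
  by move=> a; rewrite -lerBlDr sub0r lerNl -normrN ler_norm.
have E : forall g : A -> R, g = fun x => (g x + `|g x|) + (-1) * `|g x|.
  by move=> g; apply/funext => x; rewrite mulN1r addrK.
have mbC : forall g : A -> R, Cc g -> Cc (fun x => -1 * `|g x|).
  move=> g gC; apply: (Cc_sub gC) => [|x]; last by rewrite mulN1r oppr_eq0 normr_eq0.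
  exact: scal_cont (norm_cont gC.1).
have fpC : Cc (fun x => f (phi x)) := Cc_comp fC phic psic K1.
have split : forall g : A -> R, Cc g -> I g = I (fun x => g x + `|g x|) + - I (fun x => `|g x|).
  move=> g gC.
  have gbC : Cc (fun x => `|g x|).
    apply: (Cc_sub gC); first exact: norm_cont gC.1.
    by move=> x; rewrite normr_eq0.
  have gaC : Cc (fun x => g x + `|g x|).
    apply: (Cc_sub gC); last by move=> x; apply: contra => /eqP ->; rewrite normr0 addr0.
    exact: add_cont gC.1 (norm_cont gC.1).
  rewrite {1}(E g).
  rewrite (Iadd (fun x => g x + `|g x|) (fun x => -1 * `|g x|) gaC (mbC g gC)).
  by rewrite (Iscal (-1) (fun x => `|g x|) gbC) mulN1r.
rewrite (split _ fC) (split _ fpC).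
by rewrite (pos _ aC a0) (pos _ bC b0).
Qed.

Unset Implicit Arguments.
Theorem proposition5 (R : realType) (A : topologicalType)
  (mul : A -> A -> A) (inv : A -> A) (e : A)
  (I : (A -> R) -> R) :
  locally_compact_group mul inv e ->
  linear_on_Cc I ->
  ((forall f h, Cc f -> (forall a, 0 <= f a) -> I (ltransl mul h f) <= I f) ->
     forall f h, Cc f -> I (ltransl mul h f) = I f) /\
  ((forall f h, Cc f -> (forall a, 0 <= f a) -> I (rtransl mul h f) <= I f) ->
     forall f h, Cc f -> I (rtransl mul h f) = I f).
Proof.
move=> [[assoc e1 e2 inv1 inv2] mc _ _ _] lin; split.
  move=> H f h fC.
  apply: (gen_inv (phi := fun x => mul h x) (psi := fun x => mul (inv h) x)) => //.
  - exact: cont_l.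
  - exact: cont_l.
  - by move=> x; rewrite assoc inv1 e1.
  - by move=> x; rewrite assoc inv2 e1.
  - by move=> g gC g0; exact: (H g h gC g0).
  - by move=> g gC g0; exact: (H g (inv h) gC g0).
move=> H f h fC.
apply: (gen_inv (phi := fun x => mul x h) (psi := fun x => mul x (inv h))) => //.
- exact: cont_r.
- exact: cont_r.
- by move=> x; rewrite -assoc inv2 e2.
- by move=> x; rewrite -assoc inv1 e2.
- by move=> g gC g0; exact: (H g h gC g0).
- by move=> g gC g0; exact: (H g (inv h) gC g0).
Qed.
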